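(* Let $(X,\sigma,T)$ be as in the context, $x\in eX$, $\xi\in X_{eq}$ and $f_1,f_2\in L$. (1) If $\xi$ is regular, then $(f_1,f_2)\in R^{\xi-\pi_{eq}(x)}_{\mathrm{ev}_x}$ if and only if $(ef_1)^{-1}f_2\in\mathrm{stab}_{\mathcal G}(x)$ and $\tilde\pi_{eq}(f_1)=\tilde\pi_{eq}(f_2)=\xi-\pi_{eq}(x)$. (2) If every point of $\pi_{eq}^{-1}(\xi)$ separates the idempotents of $L$, then $(f_1,f_2)\in R^{\xi-\pi_{eq}(x)}_{\mathrm{ev}_x}$ if and only if $(ef_1)^{-1}f_2\in\mathrm{stab}_{\mathcal G}(x)$, $f_1^0=f_2^0$ and $\tilde\pi_{eq}(f_1)=\tilde\pi_{eq}(f_2)=\xi-\pi_{eq}(x)$.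
   Context: $T$ abelian group acting continuously, minimally and non-distally by $\sigma$ on a compact Hausdorff space $X$. $E(X)$: Ellis semigroup (closure of $\{\sigma^t\}$ in $X^X$). $\pi_{eq}:X\to X_{eq}$: maximal equicontinuous factor ($X_{eq}$ a compact abelian group). Points $x,y$ are proximal if $f(x)=f(y)$ for some $f\in E(X)$; $\xi\in X_{eq}$ is singular if $\pi_{eq}^{-1}(\xi)$ contains two distinct proximal points, regular otherwise. Fix a minimal idempotent $e$, $L=E(X)e$, $\mathcal G=eL$ (a group with identity $e$; $g^{-1}$ denotes the group inverse), $\mathrm{stab}_{\mathcal G}(x)=\{g\in\mathcal G: g(x)=x\}$. For $f\in L$, $f^{-1}$ is its unique normal inverse in the completely simple semigroup $L$ and $f^0=f^{-1}f$. A point separates the idempotents of $L$ if evaluation at it is injective on the set of idempotents of $L$. $\tilde\pi_{eq}(f)=\pi_{eq}(f(y))-\pi_{eq}(y)$ (independent of $y$). $R^\zeta_{\mathrm{ev}_x}=\{(f_1,f_2)\in L\times L: f_1(x)=f_2(x),\ \tilde\pi_{eq}(f_i)=\zeta,\ i=1,2\}$. *)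

(* Defs.v *)
From HB Require Import structures.
From mathcomp Require Import all_boot all_order all_algebra.
From mathcomp Require Import all_classical all_reals all_analysis.
From Stdlib Require Import ClassicalEpsilon.
Import Order.TTheory GRing.Theory Num.Theory.

Set Implicit Arguments.
Unset Strict Implicit.
Unset Printing Implicit Defensive.

Local Open Scope classical_set_scope.
Local Open Scope ring_scope.

Definition is_action (T : zmodType) (X : Type) (s : T -> X -> X) : Prop :=
  (forall x, s 0 x = x) /\ (forall t u x, s (t + u) x = s t (s u x)).

Definition continuous_action (T : zmodType) (X : topologicalType)
    (s : T -> X -> X) : Prop :=
  is_action s /\ (forall t, continuous (s t)).

Definition minimal_action (T : zmodType) (X : topologicalType)
    (s : T -> X -> X) : Prop :=
  forall x : X, closure (range (fun t => s t x)) = [set: X].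

Definition ellis (T : zmodType) (X : topologicalType) (s : T -> X -> X)
    : set (X -> X) :=
  @closure {ptws X -> X} (range s).

Definition proximal (T : zmodType) (X : topologicalType) (s : T -> X -> X)
    (x y : X) : Prop :=
  exists f, ellis s f /\ f x = f y.

Definition non_distal (T : zmodType) (X : topologicalType) (s : T -> X -> X)
    : Prop :=
  exists x y : X, x <> y /\ proximal s x y.

Definition left_ideal (X : Type) (E I : set (X -> X)) : Prop :=
  I !=set0 /\ I `<=` E /\ (forall f g, E f -> I g -> I (f \o g)).

Definition minimal_left_ideal (X : Type) (E I : set (X -> X)) : Prop :=
  left_ideal E I /\ (forall J, left_ideal E J -> J `<=` I -> J = I).

Definition minimal_idempotent (X : Type) (E : set (X -> X)) (e : X -> X)
    : Prop :=
  E e /\ e \o e = e /\ (exists I, minimal_left_ideal E I /\ I e).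

Definition Lset (X : Type) (E : set (X -> X)) (e : X -> X) : set (X -> X) :=
  [set f \o e | f in E].

Definition Gset (X : Type) (E : set (X -> X)) (e : X -> X) : set (X -> X) :=
  [set e \o f | f in Lset E e].

Definition ginv (X : Type) (G : set (X -> X)) (e g : X -> X) : X -> X :=
  epsilon (inhabits g) (fun h => G h /\ h \o g = e /\ g \o h = e).

(** the (unique) normal inverse of f in the completely simple semigroup L,
    i.e. the inverse of f in the maximal subgroup of L containing f *)
Definition ninv (X : Type) (L : set (X -> X)) (f : X -> X) : X -> X :=
  epsilon (inhabits f)
    (fun g => L g /\ f \o g \o f = f /\ g \o f \o g = g /\ f \o g = g \o f).

Definition nzero (X : Type) (L : set (X -> X)) (f : X -> X) : X -> X :=
  ninv L f \o f.

Definition stab (X : Type) (G : set (X -> X)) (x : X) : set (X -> X) :=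
  [set g | G g /\ g x = x].

Definition equicontinuous_action (T : zmodType) (Y : uniformType)
    (tau : T -> Y -> Y) : Prop :=
  forall A, entourage A ->
    exists2 B, entourage B & forall t y z, B (y, z) -> A (tau t y, tau t z).

Definition factor_map (T : zmodType) (X Y : topologicalType)
    (s : T -> X -> X) (tau : T -> Y -> Y) (p : X -> Y) : Prop :=
  continuous p /\ (forall y, exists x, p x = y) /\
  (forall t x, p (s t x) = tau t (p x)).

Definition max_eq_factor (T : zmodType) (X : topologicalType)
    (s : T -> X -> X) (Xeq : topologicalZmodType) (pi : X -> Xeq) : Prop :=
  hausdorff_space Xeq /\ compact [set: Xeq] /\
  (exists chi : T -> Xeq, factor_map s (fun t z => z + chi t) pi) /\
  (forall (Y : uniformType) (tau : T -> Y -> Y) (p : X -> Y),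
      hausdorff_space Y -> compact [set: Y] -> continuous_action tau ->
      equicontinuous_action tau -> factor_map s tau p ->
      exists q : Xeq -> Y, continuous q /\ (forall x, p x = q (pi x))).

(** pi~(f) = pi(f y) - pi(y), independent of y. *)
Definition pitilde (X : Type) (Xeq : zmodType) (pi : X -> Xeq) (f : X -> X)
    : Xeq :=
  epsilon (inhabits (0 : Xeq)) (fun z => forall y, pi (f y) - pi y = z).

Definition regular_point (T : zmodType) (X : topologicalType)
    (s : T -> X -> X) (Xeq : zmodType) (pi : X -> Xeq) (xi : Xeq) : Prop :=
  ~ (exists y z : X, pi y = xi /\ pi z = xi /\ y <> z /\ proximal s y z).

Definition separates_idempotents (X : Type) (L : set (X -> X)) (y : X)
    : Prop :=
  forall u v, L u -> L v -> u \o u = u -> v \o v = v -> u y = v y -> u = v.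

Definition Rev (X : Type) (Xeq : zmodType) (pi : X -> Xeq) (L : set (X -> X))
    (x : X) (zeta : Xeq) : set ((X -> X) * (X -> X)) :=
  [set ff | L ff.1 /\ L ff.2 /\ ff.1 x = ff.2 x /\
            pitilde pi ff.1 = zeta /\ pitilde pi ff.2 = zeta].

(* Main.v *)
Require Import Defs.
From HB Require Import structures.
From mathcomp Require Import all_boot all_order all_algebra.
From mathcomp Require Import all_classical all_reals all_analysis.
From Stdlib Require Import ClassicalEpsilon.
Import Order.TTheory GRing.Theory Num.Theory.
Local Open Scope classical_set_scope.
Local Open Scope ring_scope.

Set Implicit Arguments.
Unset Strict Implicit.
Section Alg.
Variables (X : Type) (E I : set (X -> X)) (e : X -> X).
Hypothesis hI : minimal_left_ideal E I.
Hypothesis Ie : I e.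
Hypothesis ee : e \o e = e.

Lemma pw {f g : X -> X} : f = g -> forall z, f z = g z.
Proof. by move=> ->. Qed.

Lemma IE a : I a -> E a.
Proof. by case: hI => [[_ [h _]] _]; apply: h. Qed.

Lemma Icomp f a : E f -> I a -> I (f \o a).
Proof. by case: hI => [[_ [_ h]] _]; apply: h. Qed.

Lemma Iright v : I v -> v \o v = v -> forall a, I a -> a \o v = a.
Proof.
move=> Iv vv a Ia.
pose J := [set b | I b /\ b \o v = b].
have JI : J = I.
  apply: hI.2; last by move=> b [].
  split; first by exists v.
  split; first by move=> b [/IE].
  move=> f g Ef [Ig gv]; split; first exact: Icomp.
  by rewrite -[in RHS]gv.
by have := Ia; rewrite -JI => -[].
Qed.

Lemma Ileft g u : I g -> I u -> exists2 h, I h & h \o g = u.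
Proof.
move=> Ig Iu.
pose J := [set h \o g | h in I].
have JI : J = I.
  apply: hI.2; last by move=> b [h Ih <-]; apply: Icomp => //; apply: IE.
  split; first by exists (g \o g); exists g.
  split; first by move=> b [h Ih <-]; apply/IE/Icomp => //; apply: IE.
  move=> f b Ef [h Ih <-]; exists (f \o h) => //; exact: Icomp.
have : J u by rewrite JI.
by move=> [h Ih <-]; exists h.
Qed.

Lemma LI a : Lset E e a <-> I a.
Proof.
split; first by move=> [f Ef <-]; apply: Icomp.
move=> Ia; exists a; first exact: IE.
exact: Iright.
Qed.

Lemma group_inv u g : I u -> u \o u = u -> I g -> u \o g = g ->
  exists k, [/\ I k, u \o k = k, k \o g = u & g \o k = u].
Proof.
move=> Iu uu Ig ug.
have [h Ih hg] := @Ileft g u Ig Iu.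
pose k := u \o h.
have Ik : I k by apply: Icomp => //; apply: IE.
have uk : u \o k = k by rewrite /k -[in RHS]uu.
have kg : k \o g = u by rewrite /k -[in RHS]uu -hg.
have [h2 Ih2 h2k] := @Ileft k u Ik Iu.
pose k2 := u \o h2.
have k2k : k2 \o k = u by rewrite /k2 -[in RHS]uu -h2k.
exists k; split => //.
apply: funext => z /=.
have A : u (g (k z)) = g (k z) := pw ug (k z).
have B : k2 (k (g (k z))) = u (g (k z)) := pw k2k (g (k z)).
have C : k (g (k z)) = u (k z) := pw kg (k z).
have D : u (k z) = k z := pw uk z.
have F : k2 (k z) = u z := pw k2k z.
by rewrite -A -B C D F.
Qed.

Lemma ginv_spec g : Gset E e g ->
  let k := ginv (Gset E e) e g in
  [/\ Gset E e k, k \o g = e & g \o k = e].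
Proof.
move=> [f /LI If <-] /=.
have [k [Ik ek kg gk]] : exists k, [/\ I k, e \o k = k, k \o (e \o f) = e & (e \o f) \o k = e].
  apply: group_inv => //; first by apply: Icomp => //; apply: IE.
  by rewrite -[in RHS]ee.
have := @epsilon_spec _ (inhabits (e \o f))
  (fun h => Gset E e h /\ h \o (e \o f) = e /\ (e \o f) \o h = e).
case.
  by exists k; split => //; exists k => //; apply/LI.
by move=> ? [? ?]; split.
Qed.

Lemma ninv_spec f : I f ->
  let w := ninv (Lset E e) f in
  [/\ Lset E e w, f \o w \o f = f, w \o f \o w = w & f \o w = w \o f].
Proof.
move=> If /=.
have [h Ih hf] := @Ileft f e If Ie.
pose v := f \o h.
have fe : f \o e = f by apply: Iright.
have Iv : I v by apply: Icomp => //; apply: IE.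
have vv : v \o v = v by rewrite /v -[in RHS]fe -hf.
have vf : v \o f = f by rewrite /v -[in RHS]fe -hf.
have [k [Ik vk kf fk]] := @group_inv v f Iv vv If vf.
have := @epsilon_spec _ (inhabits f)
  (fun g => Lset E e g /\ f \o g \o f = f /\ g \o f \o g = g /\ f \o g = g \o f).
case.
  exists k; split; first exact/LI.
  split; first by rewrite fk vf.
  split; first by rewrite kf vk.
  by rewrite fk kf.
by move=> ? [? [? ?]]; split.
Qed.

Lemma nzero_spec f : I f ->
  [/\ I (nzero (Lset E e) f), nzero (Lset E e) f \o nzero (Lset E e) f = nzero (Lset E e) f
    & forall z, nzero (Lset E e) f (f z) = f z].
Proof.
move=> If; have [/LI Lw fwf wfw fw] := @ninv_spec f If.
split.
- by apply: Icomp => //; apply: IE.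
- rewrite /nzero; change (ninv (Lset E e) f \o f \o ninv (Lset E e) f \o f = ninv (Lset E e) f \o f).
  by rewrite wfw.
- move=> z; rewrite /nzero /=.
  have A := pw fw (f z); rewrite /= in A; rewrite -A.
  exact: (pw fwf z).
Qed.
End Alg.
Unset Implicit Arguments.
Arguments pw {X f g}.
Lemma ellis_pitilde_const (T : zmodType) (X : topologicalType) (s : T -> X -> X)
  (Xeq : topologicalZmodType) (pi : X -> Xeq) (chi : T -> Xeq) :
  hausdorff_space Xeq -> continuous pi ->
  (forall t x, pi (s t x) = pi x + chi t) ->
  forall f, ellis s f -> forall y0 y, pi (f y) - pi y = pi (f y0) - pi y0.
Proof.
move=> hX cpi hs f Ef y0 y.
pose Psi := fun g : {ptws X -> X} => pi (g y) - pi (g y0).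
have ev : forall z, continuous (fun g : {ptws X -> X} => pi (g z)).
  move=> z g; apply: (@continuous_comp _ _ _ (fun g : {ptws X -> X} => g z) pi); last exact: cpi.
  exact: (@proj_continuous X (fun _ => X) z).
have cPsi : continuous Psi.
  move=> g; apply: (@continuous_comp _ _ _ (fun g : {ptws X -> X} => (pi (g y), pi (g y0)))
    (fun z : Xeq * Xeq => z.1 - z.2)); last exact: sub_continuous.
  exact: cvg_pair (ev y g) (ev y0 g).
have cl : closed (Psi @^-1` [set pi y - pi y0]).
  apply: preimage_closed; first by move=> g _; exact: cPsi.
  exact/accessible_closed_set1/hausdorff_accessible.
have sub : range s `<=` Psi @^-1` [set pi y - pi y0].
  move=> g [t _ <-]; rewrite /Psi /= !hs.
  by rewrite opprD addrACA subrr addr0.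
have := (@closureS {ptws X -> X} _ _ sub) f Ef.
rewrite -(closure_id _).1 // /Psi /= => h.
rewrite -[pi (f y)](subrK (pi (f y0))) h.
by rewrite addrAC (addrAC (pi y)) subrr add0r addrC.
Qed.

Lemma pitilde_spec (X : Type) (Xeq : zmodType) (pi : X -> Xeq) (f : X -> X) :
  (exists z, forall y, pi (f y) - pi y = z) ->
  forall y, pi (f y) - pi y = pitilde pi f.
Proof.
move=> ex; rewrite /pitilde.
exact: (@epsilon_spec _ (inhabits (0 : Xeq)) (fun z => forall y, pi (f y) - pi y = z) ex).
Qed.

Theorem mainTheorem7 (T : zmodType) (X : topologicalType) (s : T -> X -> X)
  (Xeq : topologicalZmodType) (pi : X -> Xeq) (e : X -> X)
  (x : X) (xi : Xeq) (f1 f2 : X -> X) :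
  hausdorff_space X -> compact [set: X] ->
  continuous_action s -> minimal_action s -> non_distal s ->
  max_eq_factor s pi ->
  minimal_idempotent (ellis s) e ->
  (exists y, x = e y) ->
  Lset (ellis s) e f1 -> Lset (ellis s) e f2 ->
  (regular_point s pi xi ->
     (Rev pi (Lset (ellis s) e) x (xi - pi x) (f1, f2) <->
      [/\ stab (Gset (ellis s) e) x
            (ginv (Gset (ellis s) e) e (e \o f1) \o f2),
          pitilde pi f1 = xi - pi x & pitilde pi f2 = xi - pi x]))
  /\
  ((forall y, pi y = xi -> separates_idempotents (Lset (ellis s) e) y) ->
     (Rev pi (Lset (ellis s) e) x (xi - pi x) (f1, f2) <->
      [/\ stab (Gset (ellis s) e) x
            (ginv (Gset (ellis s) e) e (e \o f1) \o f2),
          nzero (Lset (ellis s) e) f1 = nzero (Lset (ellis s) e) f2,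
          pitilde pi f1 = xi - pi x & pitilde pi f2 = xi - pi x])).
Proof.
move=> _ _ _ _ _ [hXeq [_ [[chi [cpi [_ hs]]] _]]] [Ee [ee [I [hI Ie]]]] [y0 xe] L1 L2.
set E := ellis s in Ee L1 L2 *.
have ex : e x = x by rewrite xe; exact: (pw ee y0).
have If1 : I f1 := (LI hI Ie ee f1).1 L1.
have If2 : I f2 := (LI hI Ie ee f2).1 L2.
have pitL : forall f, Lset E e f -> forall y, pi (f y) - pi y = pitilde pi f.
  move=> f [g Eg <-]; apply: pitilde_spec.
  exists ((pi (g (e y0)) - pi (e y0)) + (pi (e y0) - pi y0)) => y /=.
  rewrite -(@ellis_pitilde_const _ _ s _ pi chi hXeq cpi hs _ Eg (e y0) (e y)).
  rewrite -(@ellis_pitilde_const _ _ s _ pi chi hXeq cpi hs _ Ee y0 y).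
  by rewrite addrA subrK.
have fib : forall f, Lset E e f -> pitilde pi f = xi - pi x -> pi (f x) = xi.
  move=> f Lf pf; have := pitL f Lf x; rewrite pf => /(congr1 (fun z => z + pi x)).
  by rewrite !subrK.
have Gef1 : Gset E e (e \o f1) by exists f1.
have [Gk kef ek] := ginv_spec hI Ie ee Gef1.
set k := ginv (Gset E e) e (e \o f1) in Gk kef ek *.
have [f' Lf' kE] := Gk.
have If' : I f' by apply/(LI hI Ie ee _).
have ke : forall z, k (e z) = k z.
  move=> z; rewrite -kE /=; congr (e _).
  exact: (pw (Iright hI Ie ee If') z).
have Gkf2 : Gset E e (k \o f2).
  exists (f' \o f2); last by rewrite -kE.
  by apply/(LI hI Ie ee _); apply: (Icomp hI) => //; apply: (IE hI).
have stab_e : stab (Gset E e) x (k \o f2) -> e (f1 x) = e (f2 x).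
  move=> [_ kx]; have := pw ek (f2 x); rewrite /= => <-.
  by rewrite /= in kx *; rewrite kx.
have e_stab : f1 x = f2 x -> stab (Gset E e) x (k \o f2).
  move=> eq; split => //=; rewrite -eq -ke.
  by have := pw kef x; rewrite /= ex.
split.
- move=> reg; split.
  + move=> [/= _ [_ [eq [p1 p2]]]]; split => //; exact: e_stab.
  + move=> [st p1 p2]; split => //; split => //; split => //=.
    apply: contrapT => neq; apply: reg.
    exists (f1 x), (f2 x); split; first exact: fib.
    split; first exact: fib.
    split => //; exists e; split => //; exact: stab_e.
- move=> sep; split.
  + move=> [/= _ [_ [eq [p1 p2]]]]; split => //; first exact: e_stab.
    have [In1 id1 v1] := nzero_spec hI Ie ee If1.
    have [In2 id2 v2] := nzero_spec hI Ie ee If2.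
    apply: (sep (f1 x)); first exact: fib.
    * exact/(LI hI Ie ee _).
    * exact/(LI hI Ie ee _).
    * exact: id1.
    * exact: id2.
    * by rewrite v1 eq v2.
  + move=> [st nz p1 p2]; split => //; split => //; split => //=.
    have [In1 id1 v1] := nzero_spec hI Ie ee If1.
    have [In2 id2 v2] := nzero_spec hI Ie ee If2.
    have ve : forall z, nzero (Lset E e) f1 (e z) = nzero (Lset E e) f1 z.
      move=> z; exact: (pw (Iright hI Ie ee In1) z).
    by rewrite -v1 -ve (stab_e st) ve nz v2.
Qed.
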